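(* Let $E$ be an imaginary quadratic field with $\mathrm{Emb}(\mathfrak{o}_E,\mathcal{O})\neq\emptyset$ and $\Delta_E\equiv 1\pmod 4$, and let $a_1,\dots,a_{h_E}$ be as in the context. Then $\varphi(\mathcal{T}(a_j))\equiv 1\pmod 2$ for every $1\le j\le h_E$, and \[\sum_{j=1}^{h_E}\varphi(\mathcal{T}(a_j))\equiv h_E\pmod 2.\]
   Context: $D$ is the $\mathbb{Q}$-algebra with basis $1,i,j,ij$, $i^2=j^2=-1$, $ij=-ji$ (definite, discriminant $2$), with reduced norm $\mathrm{Nm}$ and trace $\mathrm{Tr}$; $\mathcal{O}=\mathbb{Z}+\mathbb{Z}i+\mathbb{Z}j+\mathbb{Z}w$, $w=(1+i+j+ij)/2$ (Hurwitz order, class number one). $G=D^\times/\mathbb{Q}^\times$, $K_p$ image of $\mathcal{O}_p^\times$ in $G_p$, $K_f=\prod_pK_p$, $\Gamma$ image of $\mathcal{O}^\times$. $V_D$ = trace-zero elements, $L(\mathcal{O})=\{x\in\mathbb{Z}+2\mathcal{O}:\mathrm{Tr}x=0\}$, with $\mathbb{Z}$-basis $\mathbf b_1=-i+j+ij$, $\mathbf b_2=i-j+ij$, $\mathbf b_3=i+j-ij$; $\mathcal{T}(a_1\mathbf b_1+a_2\mathbf b_2+a_3\mathbf b_3)=(a_1,a_2,a_3)$. $\varphi(x)=x_1^3+x_2^3+x_3^3-x_1^2x_2-x_1^2x_3-x_2^2x_1-x_2^2x_3-x_3^2x_1-x_3^2x_2+2x_1x_2x_3$. $\mathrm{Emb}(\mathfrak{o}_E,\mathcal{O})$: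 embeddings $\iota:E\hookrightarrow D$ with $\iota(E)\cap\mathcal{O}\cong\mathfrak{o}_E$; $G$ acts by conjugation $(g\cdot\iota)(x)=g\iota(x)g^{-1}$. Fix $\iota_0\in\mathrm{Emb}(\mathfrak{o}_E,\mathcal{O})$, torus $T(R)=(\iota_0(E)\otimes R)^\times/R^\times$, $U=T(\mathbb{R})\prod_p\overline{\iota_0(\mathfrak{o}_{E,p}^\times)}$; $h_E=\#T(\mathbb{Q})\backslash T(\mathbb{A})/U$ is the class number. Choose $b_j\in T(\mathbb{A}_f)$ ($1\le j\le h_E$) with $T(\mathbb{A})=\bigsqcup_jT(\mathbb{Q})b_jU$ and write $b_j=\gamma_j(\gamma_j)_\infty^{-1}k_j$ with $\gamma_j\in G$, $\gamma_j^{-1}\cdot\iota_0\in\mathrm{Emb}(\mathfrak{o}_E,\mathcal{O})$, $k_j\in K_f$. Let $a_0\in\iota_0(E)\cap V_D$ with $\mathrm{Nm}(a_0)=-\Delta_E$ and $a_j=\gamma_j^{-1}a_0\gamma_j$; then $a_j\in L(\mathcal{O})$ and $\mathrm{Nm}(a_j)=-\Delta_E$. *)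

(* Defs.v *)
From HB Require Import structures.
From mathcomp Require Import all_boot all_order all_algebra.
From mathcomp Require Import ring.
Set Implicit Arguments. Unset Strict Implicit. Unset Printing Implicit Defensive.
Import Order.TTheory GRing.Theory Num.Theory.
Local Open Scope ring_scope.

(* x = qr x + qi x * i + qj x * j + qk x * (ij) *)
Record quat := Quat { qr : rat; qi : rat; qj : rat; qk : rat }.

Definition qadd (x y : quat) : quat :=
  Quat (qr x + qr y) (qi x + qi y) (qj x + qj y) (qk x + qk y).

(* Hamilton product with i^2 = j^2 = -1, ij = -ji *)
Definition qmul (x y : quat) : quat :=
  Quat (qr x * qr y - qi x * qi y - qj x * qj y - qk x * qk y)
       (qr x * qi y + qi x * qr y + qj x * qk y - qk x * qj y)
       (qr x * qj y - qi x * qk y + qj x * qr y + qk x * qi y)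
       (qr x * qk y + qi x * qj y - qj x * qi y + qk x * qr y).

Definition qc (c : rat) : quat := Quat c 0 0 0.
Definition qscale (c : rat) (x : quat) : quat := qmul (qc c) x.

Definition qI : quat := Quat 0 1 0 0.
Definition qJ : quat := Quat 0 0 1 0.
Definition qIJ : quat := qmul qI qJ.

Definition Nm (x : quat) : rat := qr x ^+ 2 + qi x ^+ 2 + qj x ^+ 2 + qk x ^+ 2.
Definition Tr (x : quat) : rat := 2 * qr x.
Definition qconj (x : quat) : quat := Quat (qr x) (- qi x) (- qj x) (- qk x).
Definition qinv (x : quat) : quat := qscale (Nm x)^-1 (qconj x).

Definition qw : quat := qscale (1 / 2) (qadd (qadd (qadd (qc 1) qI) qJ) qIJ).

Definition inO (x : quat) : Prop :=
  exists m1 m2 m3 m4 : int,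
    x = qadd (qadd (qadd (qc m1%:~R) (qscale m2%:~R qI))
                   (qscale m3%:~R qJ)) (qscale m4%:~R qw).

Definition inL (x : quat) : Prop :=
  Tr x = 0 /\ exists (n : int) (y : quat), inO y /\ x = qadd (qc n%:~R) (qscale 2 y).

Definition b1 : quat := Quat 0 (-1) 1 1.
Definition b2 : quat := Quat 0 1 (-1) 1.
Definition b3 : quat := Quat 0 1 1 (-1).

Definition T (x : quat) : rat * rat * rat :=
  ((qj x + qk x) / 2, (qi x + qk x) / 2, (qi x + qj x) / 2).

Lemma T_spec (x : quat) : Tr x = 0 ->
  let: (a1, a2, a3) := T x in
  x = qadd (qadd (qscale a1 b1) (qscale a2 b2)) (qscale a3 b3).
Proof.
case: x => r i j k; rewrite /Tr /= => /eqP; rewrite mulf_eq0 /= => /eqP ->.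
rewrite /qadd /qscale /qmul /qc /b1 /b2 /b3 /=; congr Quat; by field.
Qed.

Definition phi (x : rat * rat * rat) : rat :=
  let: (x1, x2, x3) := x in
  x1 ^+ 3 + x2 ^+ 3 + x3 ^+ 3
  - x1 ^+ 2 * x2 - x1 ^+ 2 * x3 - x2 ^+ 2 * x1 - x2 ^+ 2 * x3
  - x3 ^+ 2 * x1 - x3 ^+ 2 * x2 + 2 * x1 * x2 * x3.

Definition imag_quad_disc_1mod4 (dE : int) : Prop :=
  (dE < 0)%R /\ (dE %% 4)%Z = 1 /\
  (forall d : nat, (d * d)%:Z %| dE -> d = 1%N)%Z.

(* An embedding iota : E = Q(sqrt dE) -> D is determined by a = iota(sqrt dE),
   with a^2 = dE.  It lies in Emb(o_E, O) iff iota(E) \cap O = iota(o_E),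
   where o_E = Z[(1 + sqrt dE)/2] (dE = 1 mod 4), i.e.
   iota(o_E) = { m + n (1 + a)/2 : m, n in Z }. *)
Definition opt_emb (dE : int) (a : quat) : Prop :=
  qmul a a = qc dE%:~R /\
  forall u v : rat,
    inO (qadd (qc u) (qscale v a)) <->
    exists m n : int, u = m%:~R + n%:~R / 2 /\ v = n%:~R / 2.

Definition qconjug (g a : quat) : quat := qmul (qmul g a) (qinv g).

(* Main.v *)
Require Import Defs.
From mathcomp Require Import all_boot all_order all_algebra.
From mathcomp Require Import ring lra zify.
Import GRing.Theory Num.Theory.
Local Open Scope ring_scope.
Lemma phi_core (x1 x2 x3 u1 u2 u3 S : rat) :
  x1 * (x1 + 1) = 2 * u1 -> x2 * (x2 + 1) = 2 * u2 -> x3 * (x3 + 1) = 2 * u3 ->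
  x1 + x2 + x3 = 2 * S + 1 ->
  phi (x1, x2, x3) = 2 * (u1 * (x1 - 1) + u2 * (x2 - 1) + u3 * (x3 - 1)
     - (x2 * u1 + x1 * u2 - x1 * x2) - (x3 * u1 + x1 * u3 - x1 * x3)
     - (x3 * u2 + x2 * u3 - x2 * x3) + x1 * x2 * x3 + S) + 1.
Proof.
move=> h1 h2 h3 hs.
apply/eqP; rewrite -subr_eq0; apply/eqP.
have -> : phi (x1, x2, x3) - (2 * (u1 * (x1 - 1) + u2 * (x2 - 1) + u3 * (x3 - 1)
     - (x2 * u1 + x1 * u2 - x1 * x2) - (x3 * u1 + x1 * u3 - x1 * x3)
     - (x3 * u2 + x2 * u3 - x2 * x3) + x1 * x2 * x3 + S) + 1)
  = (x1 - 1 - x2 - x3) * (x1 * (x1 + 1) - 2 * u1)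
  + (x2 - 1 - x1 - x3) * (x2 * (x2 + 1) - 2 * u2)
  + (x3 - 1 - x1 - x2) * (x3 * (x3 + 1) - 2 * u3)
  + (x1 + x2 + x3 - (2 * S + 1)) by rewrite /phi; ring.
by rewrite h1 h2 h3 hs !subrr !mulr0 !addr0.
Qed.

Lemma par (t : int) : exists u : int, t * (t + 1) = 2 * u.
Proof.
have := divz_eq t 2; have := modz_ge0 t (isT : (2:int) != 0);
have := ltz_pmod t (isT : (0:int) < 2).
set q := (t %/ 2)%Z; set b := (t %% 2)%Z => hb1 hb0 ht.
have [hb|hb] : b = 0 \/ b = 1 by lia.
- exists (q * (2 * q + 1)); rewrite ht hb; ring.
- exists ((2 * q + 1) * (q + 1)); rewrite ht hb; ring.
Qed.

Lemma phi_int_odd (X1 X2 X3 S : int) : X1 + X2 + X3 = 2 * S + 1 ->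
  exists k : int, phi (X1%:~R, X2%:~R, X3%:~R) = (2 * k + 1)%:~R.
Proof.
move=> hs.
have [u1 h1] := par X1; have [u2 h2] := par X2; have [u3 h3] := par X3.
exists (u1 * (X1 - 1) + u2 * (X2 - 1) + u3 * (X3 - 1)
     - (X2 * u1 + X1 * u2 - X1 * X2) - (X3 * u1 + X1 * u3 - X1 * X3)
     - (X3 * u2 + X2 * u3 - X2 * X3) + X1 * X2 * X3 + S).
have cast (p q : int) : p = q -> (p%:~R : rat) = q%:~R by move->.
move/cast: h1; move/cast: h2; move/cast: h3; move/cast: hs.
rewrite !(rmorphD, rmorphM, rmorph1) /= => hs' h3' h2' h1'.
have := phi_core _ _ _ _ _ _ _ h1' h2' h3' hs'; rewrite /phi => ->.
rewrite !(rmorphD, rmorphM, rmorphB, rmorphN, rmorph1) /=.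
ring.
Qed.

Lemma key (dE : int) (a : quat) : (dE < 0) -> opt_emb dE a ->
  exists k : int, phi (T a) = (2 * k + 1)%:~R.
Proof.
case: a => r x y z hneg [Hsq Hiff]; set P := phi _.
have : exists m n : int, (1/2 : rat) = m%:~R + n%:~R/2 /\ (1/2 : rat) = n%:~R/2.
  by exists 0, 1; rewrite add0r.
move=> H0; have := (Hiff (1/2) (1/2)).2 H0; rewrite /inO => -[m1 [m2 [m3 [m4]]]].
rewrite /qadd /qscale /qmul /qc /qw /qI /qJ /qIJ /=.
case=> e1 e2 e3 e4.
move: Hsq; rewrite /qmul /qc /=; case=> s1 s2 s3 s4.
have ex : r = 2 * m1%:~R + m4%:~R - 1 by lra.
have ex2 : x = 2 * m2%:~R + m4%:~R by lra.
have ex3 : y = 2 * m3%:~R + m4%:~R by lra.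
have ex4 : z = m4%:~R by lra.
have dneg : (dE%:~R : rat) < 0 by rewrite ltrz0.
have r0 : r = 0.
  apply/eqP; apply/negP => /negP rn.
  have x0 : x = 0.
    have : (2 * r) * x = 0 by rewrite -s2; ring.
    by move/eqP; rewrite mulf_eq0 (negbTE (mulf_neq0 (isT : (2:rat) != 0) rn)) /= => /eqP.
  have y0 : y = 0.
    have : (2 * r) * y = 0 by rewrite -s3; ring.
    by move/eqP; rewrite mulf_eq0 (negbTE (mulf_neq0 (isT : (2:rat) != 0) rn)) /= => /eqP.
  have z0 : z = 0.
    have : (2 * r) * z = 0 by rewrite -s4; ring.
    by move/eqP; rewrite mulf_eq0 (negbTE (mulf_neq0 (isT : (2:rat) != 0) rn)) /= => /eqP.
  rewrite x0 y0 z0 in s1.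
  have hr : r ^+ 2 = dE%:~R by rewrite -s1; ring.
  have := sqr_ge0 r; rewrite hr => h; by move: (Order.POrderTheory.lt_le_trans dneg h); rewrite Order.POrderTheory.ltxx.
have m4e : m4 = 1 - 2 * m1.
  apply: (@intr_inj rat); rewrite !(rmorphB, rmorphM, rmorph1) /=.
  rewrite r0 in ex; lra.
have hT : T (Quat r x y z) = ((m3 + m4)%:~R, (m2 + m4)%:~R, (m2 + m3 + m4)%:~R).
  rewrite /T /=; congr (_, _, _); rewrite !rmorphD /=; lra.
rewrite /P hT; apply: (@phi_int_odd _ _ _ (m2 + m3 - 3 * m1 + 1)); lia.
Qed.

Lemma sum_odd {I : eqType} (s : seq I) (F : I -> rat) :
  (forall j, exists k : int, F j = (2 * k + 1)%:~R) ->
  exists k : int, \sum_(j <- s) F j = (size s)%:R + (2 * k)%:~R.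
Proof.
move=> hF; elim: s => [|a s [k IH]].
  by exists 0; rewrite big_nil.
have [k1 h1] := hF a.
exists (k1 + k); rewrite big_cons IH h1 /=.
rewrite -[(size s).+1]addn1 natrD !(rmorphD, rmorphM, rmorph1) /=; ring.
Qed.

Theorem lemma5p1 (dE : int) (hE : imag_quad_disc_1mod4 dE)
  (a0 : quat) (ha0 : opt_emb dE a0)
  (h : nat) (gam : 'I_h -> quat)
  (hgam : forall j, gam j <> qc 0 /\ opt_emb dE (qconjug (qinv (gam j)) a0)) :
  (forall j : 'I_h, exists k : int,
     phi (T (qconjug (qinv (gam j)) a0)) = (2 * k + 1)%:~R) /\
  (exists k : int,
     \sum_(j < h) phi (T (qconjug (qinv (gam j)) a0)) = h%:R + (2 * k)%:~R).
Proof.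
have H1 : forall j : 'I_h, exists k : int,
     phi (T (qconjug (qinv (gam j)) a0)) = (2 * k + 1)%:~R.
  move=> j; exact: (key _ _ hE.1 (hgam j).2).
split=> //.
have [k hk] := sum_odd (index_enum 'I_h) _ H1.
exists k; rewrite hk; congr (_%:R + _).
by rewrite /index_enum unlock /= -enumT size_enum_ord.
Qed.
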